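(* Let $(X,\pi)$ be a finite symmetric two-player game with relative payoff game $(X,\Delta)$. If $X$ is a totally ordered set and $\Delta$ has increasing differences, or has decreasing differences, or is a valuation, then imitation is essentially unbeatable.
   Context: $\pi(x,y)$ is the payoff of the player choosing $x$ against $y$. Relative payoff: $\Delta(x,y)=\pi(x,y)-\pi(y,x)$. For totally ordered $X$, $\Delta$ has decreasing (resp. increasing) differences if for all $x''>x'$ and $y''>y'$ in $X$, $\Delta(x'',y'')-\Delta(x',y'')\le$ (resp. $\ge$) $\Delta(x'',y')-\Delta(x',y')$; $\Delta$ is a valuation if it has both. Let $\hat\Delta:=\max_{x,y\in X}\Delta(x,y)$. Imitate-the-best: given initial $y_0\in X$ and any opponent sequence $(x_t)_{t\ge0}$, $y_t=x_{t-1}$ if $\Delta(x_{t-1},y_{t-1})>0$ and $y_t=y_{t-1}$ otherwise. Imitation is essentially unbeatable if for every $y_0\in X$ and every sequence $(x_t)$, $\limsup_{T\to\infty}\sum_{t=0}^T\Delta(x_t,y_t)\le\hat\Delta$. *)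

(* Defs.v *)
From mathcomp Require Import all_boot all_order all_algebra.
From mathcomp Require Import all_classical all_reals all_analysis.
Set Implicit Arguments. Unset Strict Implicit. Unset Printing Implicit Defensive.
Import Order.TTheory GRing.Theory Num.Theory.
Local Open Scope ring_scope.

Section Game.
Variables (R : realType) (d : Order.disp_t) (X : finOrderType d).

Definition relpay (pi : X -> X -> R) (x y : X) : R := pi x y - pi y x.

Definition decreasing_differences (D : X -> X -> R) : Prop :=
  forall x' x'' y' y'' : X, (x' < x'')%O -> (y' < y'')%O ->
    D x'' y'' - D x' y'' <= D x'' y' - D x' y'.

Definition increasing_differences (D : X -> X -> R) : Prop :=
  forall x' x'' y' y'' : X, (x' < x'')%O -> (y' < y'')%O ->
    D x'' y'' - D x' y'' >= D x'' y' - D x' y'.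

Definition valuation (D : X -> X -> R) : Prop :=
  decreasing_differences D /\ increasing_differences D.

(* hatDelta = max_{x,y} D x y ; z is any element (used as the seed of the
   maximum over the nonempty finite set X*X; the value does not depend on z) *)
Definition hatDelta (D : X -> X -> R) (z : X) : R :=
  \big[Num.max/D z z]_(p : X * X) D p.1 p.2.

Fixpoint imitate (D : X -> X -> R) (y0 : X) (x : nat -> X) (t : nat) : X :=
  match t with
  | 0 => y0
  | t'.+1 => let y := imitate D y0 x t' in
             if 0 < D (x t') y then x t' else y
  end.

Definition essentially_unbeatable (D : X -> X -> R) : Prop :=
  forall (y0 : X) (x : nat -> X),
    (limn_esup (fun T : nat =>
       ((\sum_(t < T.+1) D (x t) (imitate D y0 x t))%:E)) <= (hatDelta D y0)%:E)%E.

End Game.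

(* Main.v *)
Require Import Defs.
From mathcomp Require Import all_boot all_order all_algebra.
From mathcomp Require Import all_classical all_reals all_analysis.
From mathcomp Require Import lra.
Import Order.TTheory GRing.Theory Num.Theory.
Local Open Scope ring_scope.

Section Aux.
Variables (R : realType) (d : Order.disp_t) (X : finOrderType d) (pi : X -> X -> R).
Local Notation D := (relpay pi).

Lemma antisymD x y : D x y = - D y x.
Proof. rewrite /relpay; lra. Qed.

Lemma D0 x : D x x = 0.
Proof. by rewrite /relpay subrr. Qed.

Definition cross0 := forall x' x'' y' y'' : X,
  D x'' y'' - D x' y'' = D x'' y' - D x' y'.

Lemma strict_cross_gen :
  (forall x' x'' y' y'' : X, (x' < x'')%O -> (y' < y'')%O ->
     D x'' y'' - D x' y'' = D x'' y' - D x' y') -> cross0.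
Proof.
move=> H x' x'' y' y''.
case: (ltgtP x' x'') => hx; last by rewrite hx; lra.
- case: (ltgtP y' y'') => hy; last by rewrite hy; lra.
  + exact: H.
  + have := H _ _ _ _ hx hy; lra.
- case: (ltgtP y' y'') => hy; last by rewrite hy; lra.
  + have := H _ _ _ _ hx hy; lra.
  + have := H _ _ _ _ hx hy; lra.
Qed.

Lemma dec_cross : decreasing_differences D -> cross0.
Proof.
move=> H; apply: strict_cross_gen => x' x'' y' y'' hx hy.
have h1 := H _ _ _ _ hx hy.
have h2 := H _ _ _ _ hy hx.
rewrite (antisymD y'' x'') (antisymD y' x'') (antisymD y'' x') (antisymD y' x') in h2.
lra.
Qed.

Lemma inc_cross : increasing_differences D -> cross0.
Proof.
move=> H; apply: strict_cross_gen => x' x'' y' y'' hx hy.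
have h1 := H _ _ _ _ hx hy.
have h2 := H _ _ _ _ hy hx.
rewrite (antisymD y'' x'') (antisymD y' x'') (antisymD y'' x') (antisymD y' x') in h2.
lra.
Qed.

Lemma cross_split (C : cross0) z x y : D x y = D x z - D y z.
Proof.
have := C z x z y; rewrite D0 (antisymD z y); lra.
Qed.

Lemma step_bound (C : cross0) y0 (x : nat -> X) n :
  D (x n) (imitate D y0 x n) <= D (imitate D y0 x n.+1) y0 - D (imitate D y0 x n) y0.
Proof.
rewrite /= (cross_split C y0 (x n) (imitate D y0 x n)).
case: ifP => hp; first lra.
move/negbT: hp; rewrite -leNgt (cross_split C y0 (x n)) => hp; lra.
Qed.

Lemma partial_bound (C : cross0) y0 (x : nat -> X) n :
  \sum_(t < n) D (x t) (imitate D y0 x t) <= D (imitate D y0 x n) y0.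
Proof.
elim: n => [|n IH]; first by rewrite big_ord0 D0.
rewrite big_ord_recr /=.
have := step_bound C y0 x n; move: IH.
set S := \sum_(i < n) _; lra.
Qed.

Lemma le_hat u v z : D u v <= hatDelta D z.
Proof.
rewrite /hatDelta (bigD1 (u, v)) //=.
by rewrite le_max lexx.
Qed.

End Aux.

Theorem corollary4 (R : realType) (d : Order.disp_t) (X : finOrderType d)
  (pi : X -> X -> R) :
  increasing_differences (relpay pi) \/ decreasing_differences (relpay pi)
    \/ valuation (relpay pi) ->
  essentially_unbeatable (relpay pi).
Proof.
move=> H.
have C : @cross0 R d X pi.
  case: H => [H|[H|[H _]]]; [exact: inc_cross | exact: dec_cross | exact: dec_cross].
move=> y0 x.
rewrite limn_esup_lim.
apply: lime_le; first exact: is_cvg_esups.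
near=> m.
apply: ub_ereal_sup => _ [n /= _ <-].
rewrite lee_fin.
exact: (le_trans (@partial_bound _ _ _ pi C y0 x n.+1) (@le_hat _ _ _ pi _ y0 y0)).
Unshelve. all: by end_near.
Qed.
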